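(* Let $k$ be an algebraically closed field of characteristic $p$ and $\pi: X\to Y$ a $\mathbb Z/p$-cover of smooth projective curves over $k$. Suppose that $y$ is an Artin–Schreier generator of $\pi$ in global standard form. Then $z := y^{p-1}$ is a magical element for $\pi$, i.e. $\mathrm{ord}_P(z)\ge -d'_P$ for every $P\in X(k)$ and $\mathrm{tr}_{k(X)/k(Y)}(z)\ne 0$; moreover, the dual of $z$ with respect to the trace pairing is $z^\vee := z-2$, i.e. $\mathrm{tr}_{k(X)/k(Y)}(g_1^*(z)g_2^*(z^\vee)) = \delta_{g_1,g_2}$ for all $g_1,g_2\in\mathbb Z/p$.
   Context: An Artin–Schreier generator of $\pi$ is $y\in k(X)$ with $k(X) = k(Y)(y)$, $y^p - y = f\in k(Y)$, and $\sigma^*(y) = y+1$ for a generator $\sigma$ of $\mathbb Z/p$. It is in local standard form at $Q\in Y(k)$ if $f$ is regular at $Q$ or has a pole at $Q$ of order not divisible by $p$; it is in global standard form if it is in local standard form at every $Q\in Y(k)$ and $f\notin k$. For $P\in X(k)$ with lower ramification groups $G_{P,i}$, $d'_P := \sum_{i\ge1}(\#G_{P,i}-1)$. *)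

(* Defs.v *)
From HB Require Import structures.
From mathcomp Require Import all_boot all_order all_algebra all_fingroup all_field.
From Stdlib Require Import ClassicalEpsilon.
Set Implicit Arguments. Unset Strict Implicit. Unset Printing Implicit Defensive.
Import Order.TTheory GRing.Theory Num.Theory.
Local Open Scope ring_scope.

Definition pb (P : Prop) : bool :=
  if excluded_middle_informative P then true else false.

(* A place (= a k-point of the smooth projective curve whose function field
   is F): a normalized discrete valuation ord : F -> Z which is trivial on the
   constants (those x with [const x]).  The value ord 0 is irrelevant (ord 0
   is "+oo"); every use below guards against x = 0. *)
Definition is_place (F : fieldType) (const : F -> Prop) (ord : F -> int) : Prop :=
  [/\ forall x y : F, x != 0 -> y != 0 -> ord (x * y) = ord x + ord y,
      forall x y : F, x != 0 -> y != 0 -> x + y != 0 ->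
        Num.min (ord x) (ord y) <= ord (x + y),
      forall x : F, const x -> x != 0 -> ord x = 0 &
      exists t : F, t != 0 /\ ord t = 1].

Definition ord_ge (F : fieldType) (ord : F -> int) (x : F) (n : int) : Prop :=
  x = 0 \/ n <= ord x.

(* Sum of a series of natural numbers, in nat extended by +oo (= None). *)
Definition series_nat (a : nat -> nat) : option nat :=
  match excluded_middle_informative (exists N, forall M, (N <= M)%N -> a M = 0%N) with
  | left H => Some (\sum_(i < proj1_sig (constructive_indefinite_description _ H)) a i)%N
  | right _ => None
  end.

(* K is the function field of a curve over k (via iota): K is a finite
   extension of a purely transcendental extension k(t). *)
Definition function_field_1 (k : fieldType) (K : fieldType)
    (iota : {rmorphism k -> K}) : Prop :=
  exists t : K,
    (forall q : {poly k}, q != 0 -> (map_poly iota q).[t] != 0) /\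
    exists (n : nat) (b : 'I_n -> K),
      forall x : K, exists (d : {poly k}) (a : 'I_n -> {poly k}),
        (map_poly iota d).[t] != 0 /\
        (map_poly iota d).[t] * x = \sum_(i < n) (map_poly iota (a i)).[t] * b i.

Section Cover.
Variables (k : fieldType) (K : fieldType) (iota : {rmorphism k -> K})
          (L : splittingFieldType K).

Definition constK (x : K) : Prop := exists a : k, x = iota a.
Definition constL (x : L) : Prop := exists a : k, x = (iota a)%:A.

Definition pointY (ord : K -> int) := is_place constK ord.
Definition pointX (ord : L -> int) := is_place constL ord.

Definition Gcov : {set gal_of {:L}} := 'Gal({:L} / 1%VS)%g.

Definition ram_group (ord : L -> int) (i : nat) : {set gal_of {:L}} :=
  [set s in Gcov | pb (forall x : L, ord_ge ord x 0 ->
                                    ord_ge ord (s x - x) (i.+1)%:Z)].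

Definition dprime (ord : L -> int) : option nat :=
  series_nat (fun i => if i is 0 then 0%N else (#|ram_group ord i| - 1)%N).

Definition ord_ge_neg_dprime (ord : L -> int) (x : L) : Prop :=
  match dprime ord with
  | Some d => ord_ge ord x (- (d%:Z))
  | None => True
  end.

Definition local_standard_form (p : nat) (f : K) (ord : K -> int) : Prop :=
  ord_ge ord f 0 \/ (f != 0 /\ ord f < 0 /\ ~~ (p %| `|ord f|)%N).

Definition AS_generator (p : nat) (sigma : gal_of {:L}) (y : L) (f : K) : Prop :=
  [/\ <<1%VS; y>>%VS = {:L}%VS, y ^+ p - y = f%:A & sigma y = y + 1].

Definition global_standard_form (p : nat) (f : K) : Prop :=
  (forall ord : K -> int, pointY ord -> local_standard_form p f ord) /\ ~ constK f.
End Cover.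

(* Main.v *)
Require Import Defs.
From HB Require Import structures.
From mathcomp Require Import all_boot all_order all_algebra all_fingroup all_solvable all_field.
From mathcomp Require Import zify ring.
From Stdlib Require Import ClassicalEpsilon.
Import Order.TTheory GRing.Theory Num.Theory.
Local Open Scope ring_scope.


Section Val.
Variables (F : fieldType) (v : F -> int).
Hypothesis vM : forall x y : F, x != 0 -> y != 0 -> v (x * y) = v x + v y.
Hypothesis vU : forall x y : F, x != 0 -> y != 0 -> x + y != 0 ->
        Num.min (v x) (v y) <= v (x + y).

Lemma v1 : v 1 = 0.
Proof. have := vM _ _ (oner_neq0 F) (oner_neq0 F); rewrite mulr1 => h.
move: h; set a := v 1; lia.
 Qed.

Lemma vN1 : v (-1) = 0.
Proof.
have h : (-1 : F) != 0 by rewrite oppr_eq0 oner_neq0.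
by have := vM _ _ h h; rewrite mulrNN mulr1 v1 => /eqP; lia.
Qed.

Lemma vN x : x != 0 -> v (- x) = v x.
Proof.
move=> x0; have h : (-1 : F) != 0 by rewrite oppr_eq0 oner_neq0.
by rewrite -mulN1r vM // vN1 add0r.
Qed.

Lemma vV x : x != 0 -> v x^-1 = - v x.
Proof.
move=> x0; have := vM _ _ x0 (invr_neq0 x0); rewrite mulfV // v1 => /eqP; lia.
Qed.

Lemma vX x m : x != 0 -> v (x ^+ m) = m%:Z * v x.
Proof.
move=> x0; elim: m => [|m IH]; first by rewrite expr0 v1 mul0r.
by rewrite exprS vM ?expf_neq0 // IH -[m.+1]addn1 PoszD mulrDl mul1r addrC.
Qed.

Lemma ogeD x y A : ord_ge v x A -> ord_ge v y A -> ord_ge v (x + y) A.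
Proof.
case=> [->|hx]; first by rewrite add0r.
case=> [->|hy]; first by rewrite addr0; right.
have [x0|x0] := eqVneq x 0; first by rewrite x0 add0r; right.
have [y0|y0] := eqVneq y 0; first by rewrite y0 addr0; right.
have [s0|s0] := eqVneq (x + y) 0; first by left.
right; apply: le_trans (vU _ _ x0 y0 s0).
by rewrite le_min hx hy.
Qed.

Lemma ogeM x y A B : ord_ge v x A -> ord_ge v y B -> ord_ge v (x * y) (A + B).
Proof.
case=> [->|hx]; first by rewrite mul0r; left.
case=> [->|hy]; first by rewrite mulr0; left.
have [x0|x0] := eqVneq x 0; first by rewrite x0 mul0r; left.
have [y0|y0] := eqVneq y 0; first by rewrite y0 mulr0; left.
by right; rewrite vM // lerD.
Qed.

Lemma ogeW x A B : ord_ge v x A -> B <= A -> ord_ge v x B.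
Proof. by case=> [->|h] hB; [left|right; apply: le_trans h]. Qed.

Lemma oge0 A : ord_ge v 0 A. Proof. by left. Qed.

Lemma ogeMn x A m : ord_ge v x A -> ord_ge v (x *+ m) A.
Proof.
move=> h; elim: m => [|m IH]; first by rewrite mulr0n; left.
by rewrite mulrS; apply: ogeD.
Qed.

Lemma ogeN x A : ord_ge v x A -> ord_ge v (- x) A.
Proof.
case=> [->|h]; first by rewrite oppr0; left.
have [x0|x0] := eqVneq x 0; first by rewrite x0 oppr0; left.
by right; rewrite vN.
Qed.

Lemma ogeSum (I : Type) (r : seq I) (P : pred I) (G : I -> F) A :
  (forall i, P i -> ord_ge v (G i) A) -> ord_ge v (\sum_(i <- r | P i) G i) A.
Proof.
move=> h; apply: (big_ind (fun x => ord_ge v x A)); [exact: oge0 | | exact: h].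
move=> a b; exact: ogeD.
Qed.

Lemma oge_nat m : ord_ge v (m%:R) 0.
Proof. by apply: ogeMn; right; rewrite v1. Qed.

Lemma vstrict x y : x != 0 -> ord_ge v y (v x + 1) -> x + y != 0 /\ v (x + y) = v x.
Proof.
move=> x0 hy.
have [y0|y0] := eqVneq y 0; first by rewrite y0 addr0.
have vy : v x + 1 <= v y by case: hy => // /eqP; rewrite (negPf y0).
have s0 : x + y != 0.
  apply/negP => /eqP s0; have ey : y = - x by rewrite -(addKr x y) s0 addr0.
  by move: vy; rewrite ey vN //; lia.
split => //.
have h1 := vU _ _ x0 y0 s0.
have Ny : - y != 0 by rewrite oppr_eq0.
have h2 := vU _ _ s0 Ny; rewrite addrK in h2; have := h2 x0.
rewrite vN //; move: h1; rewrite !ge_min => h1 h3.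
move: vy h1 h3; set a := v x; set b := v y; set c := v (x + y).
move=> vy /orP[] h1 /orP[] h3; lia.
Qed.

Lemma min_sum (u : nat -> F) m :
  (forall i j, (i < m)%N -> (j < m)%N -> i != j -> u i != 0 -> u j != 0 ->
     v (u i) != v (u j)) ->
  (\sum_(i < m) u i = 0 /\ forall i, (i < m)%N -> u i = 0) \/
  exists i, [/\ (i < m)%N, u i != 0, \sum_(j < m) u j != 0,
     v (\sum_(j < m) u j) = v (u i) &
     forall j, (j < m)%N -> u j != 0 -> v (u i) <= v (u j)].
Proof.
elim: m => [|m IH] hd.
  by left; rewrite big_ord0.
have hd' : forall i j, (i < m)%N -> (j < m)%N -> i != j -> u i != 0 -> u j != 0 ->
     v (u i) != v (u j).
  by move=> i j hi hj; apply: hd; apply: ltnW.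
rewrite big_ord_recr /=.
have [um0|um0] := eqVneq (u m) 0.
  rewrite um0 addr0; case: (IH hd') => [[S0 hz]|[i [hi ui S0 vS hmin]]].
    left; split => // i; rewrite ltnS leq_eqVlt => /orP[/eqP ->|] //; exact: hz.
  right; exists i; split => //; first exact: ltnW.
  move=> j; rewrite ltnS leq_eqVlt => /orP[/eqP ->|hj]; first by rewrite um0 eqxx.
  exact: hmin.
case: (IH hd') => [[S0 hz]|[i [hi ui S0 vS hmin]]].
  right; exists m; rewrite S0 add0r; split => //.
  move=> j; rewrite ltnS leq_eqVlt => /orP[/eqP ->|hj] //; by rewrite hz // eqxx.
have hne : v (u i) != v (u m).
  by apply: hd => //; [exact: ltnW | rewrite neq_ltn hi].
move: hne; rewrite neq_lt => /orP[] hlt.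
  have hy : ord_ge v (u m) (v (\sum_(j < m) u j) + 1).
    by right; rewrite vS; move: hlt; set a := v (u i); set b := v (u m); lia.
  have [s0 vs] := vstrict _ _ S0 hy.
  right; exists i; split => //; [exact: ltnW | by rewrite vs |].
  move=> j; rewrite ltnS leq_eqVlt => /orP[/eqP ->|hj] //; first by move=> _; apply: ltW.
  exact: hmin.
have hy : ord_ge v (\sum_(j < m) u j) (v (u m) + 1).
  by right; rewrite vS; move: hlt; set a := v (u i); set b := v (u m); lia.
have [s0 vs] := vstrict _ _ um0 hy.
right; exists m; rewrite addrC; split => //.
move=> j; rewrite ltnS leq_eqVlt => /orP[/eqP ->|hj] //.
move=> uj; apply: le_trans (ltW hlt) (hmin _ hj uj).
Qed.

Lemma min_sum_ge (u : nat -> F) m N :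
  (forall i j, (i < m)%N -> (j < m)%N -> i != j -> u i != 0 -> u j != 0 ->
     v (u i) != v (u j)) ->
  ord_ge v (\sum_(i < m) u i) N -> forall i, (i < m)%N -> ord_ge v (u i) N.
Proof.
move=> hd hS i hi; case: (min_sum _ _ hd) => [[S0 hz]|[i0 [hi0 ui0 S0 vS hmin]]].
  by left; apply: hz.
have [ui|ui] := eqVneq (u i) 0; first by left.
right; case: hS => [/eqP|hS]; first by rewrite (negPf S0).
by apply: le_trans hS _; rewrite vS; apply: hmin.
Qed.
End Val.


Section PowSum.
Variables (F : fieldType) (p : nat).
Hypothesis pr : prime p.
Hypothesis ch : p \in [pchar F].

Lemma chp : p%:R = 0 :> F. Proof. exact: pcharf0 ch. Qed.

Lemma fermat n : (n%:R : F) ^+ p = n%:R.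
Proof. by rewrite -(pFrobenius_autE ch) rmorph_nat. Qed.

Lemma natr_neq0 n : (0 < n < p)%N -> (n%:R : F) != 0.
Proof.
case/andP => h0 hp; rewrite -(dvdn_pcharf ch); apply/negP => /dvdn_leq.
by move=> /(_ h0); rewrite leqNgt hp.
Qed.

Lemma fermat1 (e : F) : e ^+ p = e -> e != 0 -> e ^+ p.-1 = 1.
Proof.
move=> he e0; apply: (mulfI e0); rewrite mulr1 -exprS prednK ?prime_gt0 //.
Qed.

Definition S i := \sum_(c < p) (c%:R : F) ^+ i.

Lemma S_tele m : (0 < m)%N -> \sum_(i < m) S i *+ 'C(m, i) = 0.
Proof.
move=> m0.
have : \sum_(0 <= c < p) ((c.+1%:R : F) ^+ m - (c%:R) ^+ m) = 0.
  by rewrite telescope_sumr // chp expr0n /= eqn0Ngt m0 subr0.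
rewrite big_mkord => h; apply: (etrans _ h); apply: esym.
under eq_bigr => c _ do rewrite -addn1 natrD exprD1n big_ord_recr /= binn mulr1n addrK.
rewrite exchange_big /=; apply: eq_bigr => i _.
by rewrite /S sumrMnl.
Qed.

Lemma S_low i : (i < p.-1)%N -> S i = 0.
Proof.
elim/ltn_ind: i => i IH hi.
have hn : (i.+1%:R : F) != 0.
  by apply: natr_neq0; rewrite ltn0Sn /=; move: hi; rewrite -ltnS prednK ?prime_gt0.
have := @S_tele i.+1 (ltn0Sn i); rewrite big_ord_recr /= binSn big1 ?add0r.
  by move/eqP; rewrite -mulr_natr mulf_eq0 (negPf hn) orbF => /eqP.
move=> j _; rewrite IH ?mul0rn //.
exact: ltn_trans (ltn_ord j) hi.
Qed.

Lemma S_top : S p.-1 = -1.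
Proof.
have q0 : (p.-1 == 0)%N = false.
  by apply/negP => /eqP h; move: (prime_gt1 pr); rewrite -(prednK (prime_gt0 pr)) h.
have h : forall n, (n <= p)%N -> \sum_(c < n) (c%:R : F) ^+ p.-1 = (n.-1)%:R.
  elim=> [|n IH] hn; first by rewrite big_ord0.
  rewrite big_ord_recr /= IH; last exact: ltnW.
  case: n IH hn => [|n] _ hn.
    by rewrite expr0n q0 addr0.
  have hn0 : (n.+1%:R : F) != 0 by apply: natr_neq0; rewrite ltn0Sn.
  by rewrite (fermat1 _ (fermat n.+1) hn0) /= -[n.+1]addn1 natrD.
by rewrite /S h // -subn1 natrB ?prime_gt0 // chp sub0r.
Qed.
End PowSum.


Section Tr.
Variables (K : fieldType) (L : splittingFieldType K) (p : nat) (sigma : gal_of {:L}).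
Hypotheses (pr : prime p) (chL : p \in [pchar L]).
Hypotheses (cardG : #|Gcov L| = p) (gen : <[sigma]>%g = Gcov L).

Lemma ord_sigma : #[sigma]%g = p.
Proof. by rewrite orderE gen. Qed.

Lemma gsX (s : gal_of {:L}) x j : s (x ^+ j) = s x ^+ j.
Proof. exact: rmorphXn. Qed.
Lemma gsM (s : gal_of {:L}) x y : s (x * y) = s x * s y.
Proof. exact: rmorphM. Qed.
Lemma gsD (s : gal_of {:L}) x y : s (x + y) = s x + s y.
Proof. exact: rmorphD. Qed.
Lemma gsB (s : gal_of {:L}) x y : s (x - y) = s x - s y.
Proof. exact: rmorphB. Qed.
Lemma gsN (s : gal_of {:L}) x : s (- x) = - s x.
Proof. exact: rmorphN. Qed.
Lemma gsn (s : gal_of {:L}) m : s m%:R = m%:R.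
Proof. exact: rmorph_nat. Qed.
Lemma gsMn (s : gal_of {:L}) x m : s (x *+ m) = s x *+ m.
Proof. exact: rmorphMn. Qed.

Lemma gal_fix (s : gal_of {:L}) b : b \in 1%VS -> s b = b.
Proof. by case/vlineP => a ->; rewrite linearZ /= rmorph1. Qed.

Lemma Gcov_exp s : s \in Gcov L -> exists a : 'I_p, s = (sigma ^+ a)%g.
Proof.
rewrite -gen => /cycleP[i ->].
have hp : (i %% p < p)%N by rewrite ltn_pmod ?prime_gt0.
by exists (Ordinal hp); rewrite /= -ord_sigma expg_mod_order.
Qed.

Definition T x := \sum_(c < p) (sigma ^+ c)%g x.

Lemma trace_sum x : galTrace 1%VS {:L} x = T x.
Proof.
rewrite /galTrace /T.
have -> : 'Gal({:L} / 1%VS)%g = [set (sigma ^+ (i : 'I_p))%g | i in 'I_p].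
  rewrite -[LHS]/(Gcov L) -gen; apply/setP => s; apply/cycleP/imsetP.
    case=> i ->; have hp : (i %% p < p)%N by rewrite ltn_pmod ?prime_gt0.
    by exists (Ordinal hp) => //; rewrite /= -ord_sigma expg_mod_order.
  by case=> i _ ->; exists i.
rewrite big_imset //=; apply: in2W => i j /eqP.
by rewrite eq_expg_ord ?ord_sigma // => /eqP.
Qed.

Lemma TD x y : T (x + y) = T x + T y.
Proof. by rewrite /T -big_split; apply: eq_bigr => c _; rewrite gsD. Qed.

Lemma TN x : T (- x) = - T x.
Proof. by rewrite /T -sumrN; apply: eq_bigr => c _; rewrite gsN. Qed.

Lemma TMl b x : b \in 1%VS -> T (b * x) = b * T x.
Proof.
move=> hb; rewrite /T mulr_sumr; apply: eq_bigr => c _.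
by rewrite gsM gal_fix.
Qed.

Lemma TMn x m : T (x *+ m) = T x *+ m.
Proof. by rewrite /T -sumrMnl; apply: eq_bigr => c _; rewrite gsMn. Qed.

Lemma nat_in1 m : (m%:R : L) \in 1%VS.
Proof. by rewrite rpred_nat. Qed.

Variable w : L.
Hypothesis hw : forall c, (sigma ^+ c)%g w = w + c%:R.

Lemma Tpow j : T (w ^+ j) = \sum_(i < j.+1) w ^+ (j - i) * S L p i *+ 'C(j, i).
Proof.
rewrite /T; under eq_bigr do rewrite gsX hw exprDn.
rewrite exchange_big /=; apply: eq_bigr => i _.
by rewrite sumrMnl -mulr_sumr.
Qed.

Lemma Tlow j : (j < p.-1)%N -> T (w ^+ j) = 0.
Proof.
move=> hj; rewrite Tpow big1 // => i _.
by rewrite S_low ?mulr0 ?mul0rn //; apply: leq_ltn_trans hj; rewrite -ltnS.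
Qed.

Lemma Ttop : T (w ^+ p.-1) = -1.
Proof.
rewrite Tpow big_ord_recr /= big1 ?add0r.
  by rewrite subnn expr0 mul1r S_top // binn mulr1n.
move=> i _; rewrite S_low ?mulr0 ?mul0rn //.
Qed.


Lemma T_sum (I : Type) (r : seq I) (P : pred I) (G : I -> L) :
  T (\sum_(i <- r | P i) G i) = \sum_(i <- r | P i) T (G i).
Proof.
rewrite /T exchange_big /=; apply: eq_bigr => c _; exact: rmorph_sum.
Qed.

Variable b : L.
Hypothesis hb : b \in 1%VS.
Hypothesis hf : w ^+ p = w + b.

Lemma q_gt0 : (0 < p.-1)%N.
Proof. by rewrite -ltnS prednK ?prime_gt0 ?prime_gt1. Qed.

Lemma Tq_i i : (i < p.-1)%N -> T (w ^+ p.-1 * w ^+ (p.-1 - i)) = - (i == 0)%:R.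
Proof.
move=> hi; have r0 : (0 < p.-1 - i)%N by rewrite subn_gt0.
have -> : w ^+ p.-1 * w ^+ (p.-1 - i) = w ^+ (p.-1 - i) + b * w ^+ (p.-1 - i).-1.
  rewrite -{1}(prednK r0) exprS mulrA -exprSr prednK ?prime_gt0 // hf mulrDl -exprS.
  by rewrite prednK // mulrC.
rewrite TD TMl // (@Tlow (p.-1 - i).-1) ?mulr0 ?addr0; last first.
  by move: r0 hi q_gt0; set q := p.-1; lia.
case: eqP => [->|/eqP i0]; first by rewrite subn0 Ttop.
by rewrite Tlow ?oppr0 //; move: i0 hi; set q := p.-1; lia.
Qed.

Lemma Tmain n : T (w ^+ p.-1 * ((w + n%:R) ^+ p.-1 - 2%:R)) = 1 - (n%:R) ^+ p.-1.
Proof.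
rewrite mulrBr TD TN (mulrC (w ^+ p.-1) 2%:R) (TMl _ _ (nat_in1 2)) Ttop exprDn mulr_sumr T_sum.
under eq_bigr => i _ do rewrite mulrnAr TMn mulrA mulrC TMl ?rpredX ?nat_in1 //.
rewrite big_ord_recr /= subnn expr0 mulr1 Ttop binn mulr1n.
under eq_bigr => i _ do rewrite Tq_i //.
rewrite (bigD1 (Ordinal q_gt0)) //= big1 ?addr0; last first.
  by move=> i hi; rewrite eqn0Ngt lt0n; move: hi; rewrite -val_eqE /= => -> ; rewrite oppr0 mulr0 mul0rn.
by rewrite expr0 mul1r bin0 mulr1n; set e := (n%:R : L) ^+ _; ring.
Qed.
End Tr.


Section Main.
Variables (k : closedFieldType) (p : nat) (K : fieldType)
    (iota : {rmorphism k -> K}) (L : splittingFieldType K)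
    (sigma : gal_of {:L}) (y : L) (f : K).
Hypotheses (pr : prime p) (chk : p \in [pchar k]) (galL : galois 1%VS {:L})
  (cardG : #|Gcov L| = p) (gen : <[sigma]>%g = Gcov L)
  (AS : AS_generator p sigma y f) (gsf : global_standard_form iota p f).

Lemma chL : p \in [pchar L].
Proof.
apply/andP; split => //; apply/eqP.
by rewrite -(rmorph_nat (in_alg L)) -(rmorph_nat iota) (pcharf0 chk) !rmorph0.
Qed.

Lemma sigX c : (sigma ^+ c)%g y = y + c%:R.
Proof.
case: AS => _ _ hs.
elim: c => [|c IH]; first by rewrite expg0 gal_id addr0.
by rewrite expgSr galM ?memvf // IH gsD gsn hs -[c.+1]add1n natrD addrA.
Qed.

Lemma yp : y ^+ p = y + f%:A.
Proof. by case: AS => _ /eqP; rewrite subr_eq addrC => /eqP. Qed.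

Lemma part2 : galTrace 1%VS {:L} (y ^+ p.-1) != 0.
Proof.
by rewrite (@trace_sum _ _ _ _ pr cardG gen) (@Ttop _ _ _ _ pr chL y sigX) oppr_eq0 oner_eq0.
Qed.

Lemma part3 (g1 g2 : gal_of {:L}) : g1 \in Gcov L -> g2 \in Gcov L ->
  galTrace 1%VS {:L} (g1 (y ^+ p.-1) * g2 (y ^+ p.-1 - 2%:R)) = (g1 == g2)%:R.
Proof.
move=> /(@Gcov_exp _ _ _ _ pr cardG gen) [a ->] /(@Gcov_exp _ _ _ _ pr cardG gen) [b ->].
rewrite eq_expg_ord ?(@ord_sigma _ _ _ _ cardG gen) //.
rewrite (@trace_sum _ _ _ _ pr cardG gen) gsB !gsX gsn !sigX.
have hab : (a <= b + p)%N by apply: leq_trans (ltnW (ltn_ord a)) (leq_addl _ _).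
have -> : y + b%:R = (y + a%:R) + (b + p - a)%:R.
  by rewrite -addrA -natrD subnKC // natrD (pcharf0 chL) addr0.
have hw : forall c, (sigma ^+ c)%g (y + a%:R) = y + a%:R + c%:R.
  by move=> c; rewrite gsD sigX gsn addrAC.
have hb1 : (f%:A : L) \in 1%VS by apply/vlineP; exists f.
have hf : (y + a%:R) ^+ p = y + a%:R + f%:A.
  rewrite -(pFrobenius_autE chL) rmorphD /= !(pFrobenius_autE chL) fermat; last exact: chL.
  by rewrite yp addrAC.
rewrite (@Tmain _ _ _ _ pr chL cardG _ hw _ hb1 hf).
case: eqP => [<-|/eqP nab].
  by rewrite addKn (pcharf0 chL) expr0n eqn0Ngt q_gt0 ?subr0.
have e0 : ((b + p - a)%:R : L) != 0.
  rewrite -(dvdn_pcharf chL); apply/negP => hd.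
  have nab' : (a : nat) != b by [].
  move: nab' hd (ltn_ord a) (ltn_ord b); set aa := nat_of_ord a; set bb := nat_of_ord b.
  move=> nab2 hd ha hb; move: hd; rewrite dvdn_eq; set kk := (_ %/ p)%N; move/eqP => hk.
  have : (kk < 2)%N by rewrite ltnNge; apply/negP => h2; move: (leq_mul h2 (leqnn p)); rewrite hk; lia.
  by case: kk hk => [|[|]] //; lia.
by rewrite (@fermat1 _ _ pr _ (@fermat _ _ chL _) e0) subrr.
Qed.

End Main.


Lemma pbT (P : Prop) : P -> pb P.
Proof. by rewrite /pb; case: excluded_middle_informative. Qed.
Lemma pbE (P : Prop) : pb P -> P.
Proof. by rewrite /pb; case: excluded_middle_informative. Qed.

Lemma algM' (K : fieldType) (L : fieldExtType K) (a b : K) : ((a * b)%:A : L) = a%:A * b%:A.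
Proof. by rewrite -!in_algE rmorphM. Qed.
Lemma algD' (K : fieldType) (L : fieldExtType K) (a b : K) : ((a + b)%:A : L) = a%:A + b%:A.
Proof. by rewrite -!in_algE rmorphD. Qed.
Lemma algV' (K : fieldType) (L : fieldExtType K) (a : K) : ((a^-1)%:A : L) = (a%:A)^-1.
Proof. by rewrite -!in_algE fmorphV. Qed.
Lemma algX' (K : fieldType) (L : fieldExtType K) (a : K) m : ((a ^+ m)%:A : L) = (a%:A) ^+ m.
Proof. by rewrite -!in_algE rmorphXn. Qed.

Section Part1.
Variables (k : closedFieldType) (p : nat) (K : fieldType)
    (iota : {rmorphism k -> K}) (L : splittingFieldType K)
    (sigma : gal_of {:L}) (y : L) (f : K).
Hypotheses (pr : prime p) (chk : p \in [pchar k]) (galL : galois 1%VS {:L})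
  (cardG : #|Gcov L| = p) (gen : <[sigma]>%g = Gcov L)
  (AS : AS_generator p sigma y f) (gsf : global_standard_form iota p f).
Variable ord : L -> int.
Hypothesis hX : pointX iota ord.

Let vM : forall x y : L, x != 0 -> y != 0 -> ord (x * y) = ord x + ord y.
Proof. by case: hX. Qed.
Let vU : forall x y : L, x != 0 -> y != 0 -> x + y != 0 ->
        Num.min (ord x) (ord y) <= ord (x + y).
Proof. by case: hX. Qed.
Let vC : forall x : L, constL iota x -> x != 0 -> ord x = 0.
Proof. by case: hX. Qed.

Let vN_ := @vN L ord vM.
Let vX_ := @vX L ord vM.
Let vV_ := @vV L ord vM.
Let ogeD_ := @ogeD L ord vU.
Let ogeM_ := @ogeM L ord vM.
Let ogeMn_ := @ogeMn L ord vU.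
Let ogeSum_ := @ogeSum L ord vU.
Let oge_nat_ := @oge_nat L ord vM vU.
Let vstrict_ := @vstrict L ord vM vU.
Let min_sum_ge_ := @min_sum_ge L ord vM vU.

Lemma y_neq0 : y != 0.
Proof.
case: AS => _ _ hs; apply/negP => /eqP y0; move: hs; rewrite y0 rmorph0 add0r.
by move/eqP; rewrite eq_sym oner_eq0.
Qed.

Definition w (a : K) := ord (a%:A).

Lemma inA_eq0 (a : K) : ((a%:A : L) == 0) = (a == 0).
Proof. by rewrite scaler_eq0 oner_eq0 orbF. Qed.

Lemma wM a b : a != 0 -> b != 0 -> w (a * b) = w a + w b.
Proof. by move=> a0 b0; rewrite /w algM' vM ?inA_eq0. Qed.

Lemma wU a b : a != 0 -> b != 0 -> a + b != 0 -> Num.min (w a) (w b) <= w (a + b).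
Proof. move=> a0 b0 s0; rewrite /w; have := vU (a%:A) (b%:A); rewrite -algD' !inA_eq0; exact. Qed.

Section WithN.
Variable n : nat.
Hypothesis hn : ord y = - n%:Z.
Hypothesis n0 : (0 < n)%N.

Lemma fA : (f%:A : L) != 0 /\ ord (f%:A) = - (p * n)%N%:Z.
Proof.
have -> : (f%:A : L) = y ^+ p + - y by case: AS => _ <-.
have yp0 : y ^+ p != 0 by rewrite expf_neq0 // y_neq0.
have hy : ord_ge ord (- y) (ord (y ^+ p) + 1).
  right; rewrite vN_ ?y_neq0 // vX_ ?y_neq0 // hn.
  have := prime_gt1 pr; move: n0; nia.
have [s0 vs] := vstrict_ _ _ yp0 hy.
by split => //; rewrite vs vX_ ?y_neq0 // hn PoszM mulrN.
Qed.


Let wX_ := @vX K w wM.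
Let wV_ := @vV K w wM.

Lemma f_neq0 : f != 0.
Proof. by have [h _] := fA; rewrite inA_eq0 in h. Qed.

Lemma wf : w f = - (p * n)%N%:Z.
Proof. by have [_ h] := fA. Qed.

Definition Pm (m : nat) := (0 < m)%N && pb (exists a : K, a != 0 /\ w a = m%:Z).

Lemma exPm : exists m, Pm m.
Proof.
exists (p * n)%N; apply/andP; split; first by rewrite muln_gt0 prime_gt0.
apply: pbT; exists f^-1; split; first by rewrite invr_eq0 f_neq0.
by rewrite wV_ ?f_neq0 // wf opprK.
Qed.

Definition d := ex_minn exPm.

Lemma d_spec : [/\ (0 < d)%N, exists a0, a0 != 0 /\ w a0 = d%:Z &
  forall m, Pm m -> (d <= m)%N].
Proof.
rewrite /d; case: ex_minnP => m /andP[m0 /pbE hm] hmin; split => //.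
Qed.

Lemma wXz (a : K) (z : int) : a != 0 -> w (a ^ z) = z * w a.
Proof.
move=> a0; case: z => m.
  by rewrite wX_.
by rewrite NegzE /= wV_ ?expf_neq0 // wX_ //; set X := w a; lia.
Qed.

Lemma d_dvd a : a != 0 -> (d%:Z %| w a)%Z.
Proof.
move=> a0; have [d0 [a0' [a00 wa0]] hmin] := d_spec.
set m := w a; have hm := divz_eq m d.
set q := (m %/ d)%Z in hm; set r := (m %% d)%Z in hm.
have r0 : 0 <= r by rewrite modz_ge0 // lt0n_neq0 ?d0.
have rd : r < d by rewrite ltz_pmod // ltz_nat.
apply/dvdz_mod0P; rewrite -/r.
have b0 : a * a0' ^ (- q) != 0 by rewrite mulf_neq0 // expfz_neq0.
have wb : w (a * a0' ^ (- q)) = r.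
  rewrite wM // ?expfz_neq0 // wXz // wa0 -/m; move: hm; set D := (d : int); lia.
apply/eqP; rewrite eq_le r0 andbT leNgt; apply/negP => rpos.
have : Pm `|r|%N.
  apply/andP; split; first by rewrite absz_gt0 gt_eqF.
  by apply: pbT; exists (a * a0' ^ (- q)); split => //; rewrite wb gez0_abs.
move/hmin; move: rd rpos r0; set R := r; lia.
Qed.


Definition ordK a := (w a %/ d)%Z.

Lemma dpos : 0 < d%:Z.
Proof. by have [d0 _ _] := d_spec; rewrite ltz_nat. Qed.
Lemma dne0 : d%:Z != 0.
Proof. by rewrite gt_eqF // dpos. Qed.

Lemma wE a : a != 0 -> w a = ordK a * d.
Proof. by move=> a0; rewrite /ordK divzK // d_dvd. Qed.

Lemma placeK : pointY iota ordK.
Proof.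
split.
- move=> a b a0 b0; apply: (mulIf dne0).
  by rewrite mulrDl -!wE ?mulf_neq0 // wM.
- move=> a b a0 b0 s0; have := wU _ _ a0 b0 s0; rewrite !wE // !ge_min.
  by case/orP => h; apply/orP; [left|right]; rewrite -(ler_pM2r dpos).
- move=> x [a ->] x0; rewrite /ordK /w vC ?div0z //; first by exists a.
  by rewrite inA_eq0.
- have [_ [a0 [a00 wa0]] _] := d_spec.
  by exists a0; split => //; rewrite /ordK wa0 divzz dne0.
Qed.

Lemma Q_spec : exists Q : nat, (Q * d = p * n)%N /\ ~~ (p %| Q)%N.
Proof.
have hw := wE _ f_neq0; rewrite wf in hw.
have [hl _] := gsf; case: (hl ordK placeK) => [[/eqP f0|h]|[_ [hneg hQ]]].
- by move: f_neq0; rewrite f0.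
- exfalso; move: hw h dpos; set o := ordK f; set D := (d : int).
  have := prime_gt0 pr; move: n0; nia.
- exists `|ordK f|%N; split => //.
  have := congr1 absz hw; rewrite abszN abszM /= => <-.
  by [].
Qed.

Lemma keyp (al r : int) : al * d = r * n -> (p %| `|r|)%N.
Proof.
have [Q [hQ npQ]] := Q_spec => h.
have e : (p : int) * n = (Q : int) * d by rewrite -!PoszM hQ.
have h2 : al * p = r * Q.
  apply: (mulIf dne0).
  rewrite mulrAC h -mulrA [(n : int) * _]mulrC e mulrA //.
have h3 := congr1 absz h2; rewrite !abszM /= in h3.
have : (p %| `|r| * Q)%N by rewrite -h3 dvdn_mull.
by rewrite Euclid_dvdM // (negPf npQ) orbF.
Qed.

Lemma distinct (a b : K) i j : a != 0 -> b != 0 -> (i < p)%N -> (j < p)%N ->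
  w a - (i * n)%N%:Z = w b - (j * n)%N%:Z -> i = j.
Proof.
move=> a0 b0 ip jp; rewrite (wE _ a0) (wE _ b0) => h.
have h1 : (ordK a - ordK b) * d = (i%:Z - j%:Z) * n.
  move: h; rewrite !PoszM; set A := ordK a; set B := ordK b; set D := (d : int); lia.
have := keyp _ _ h1; move=> /dvdnP [kk hk].
case: kk hk => [|kk] hk; first by apply/eqP; rewrite -distn_eq0 hk.
have : (`|i%:Z - j%:Z| < p)%N by move: ip jp; lia.
by rewrite hk mulSn; set X := (kk * p)%N; lia.
Qed.


Lemma notj (a : K) j : a != 0 -> (0 < j < p)%N -> w a != (j * n)%N%:Z.
Proof.
move=> a0 /andP[j0 jp]; apply/eqP => h.
have h1 : ordK a * d = j%:Z * n by rewrite -wE // h PoszM.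
have := keyp _ _ h1; rewrite absz_nat => /(dvdn_leq j0).
by rewrite leqNgt jp.
Qed.

Lemma decomp x : exists P : {poly L},
  (forall j, P`_j \in 1%VS) /\ x = \sum_(j < p) P`_j * y ^+ j.
Proof.
case: AS => hgen _ _.
exists (Fadjoin_poly 1%AS y x); split.
  by move=> j; apply: (polyOverP (Fadjoin_polyOver _ _ _)).
rewrite -horner_coef_wide.
  by rewrite Fadjoin_poly_eq // hgen memvf.
apply: leq_trans (size_Fadjoin_poly _ _ _) _.
by rewrite adjoin_degreeE hgen galois_dim // -cardG.
Qed.


Lemma ord_term (c : L) j : c \in 1%VS -> c != 0 ->
  exists a : K, [/\ a != 0, c = a%:A & ord (c * y ^+ j) = w a - (j * n)%N%:Z].
Proof.
case/vlineP => a -> c0; have a0 : a != 0 by rewrite -inA_eq0.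
exists a; split => //.
rewrite vM // ?expf_neq0 ?y_neq0 // vX_ ?y_neq0 // hn /w PoszM; set A := ord _; lia.
Qed.

Lemma claimC (s : gal_of {:L}) x : s \in Gcov L -> ord_ge ord x 0 ->
  ord_ge ord (s x - x) (n.+1)%:Z.
Proof.
move=> /(@Gcov_exp _ _ _ _ pr cardG gen) [c ->] hx.
have [P [hP ex]] := decomp x; rewrite ex in hx *.
pose u := fun j => P`_j * y ^+ j.
have hd : forall i j, (i < p)%N -> (j < p)%N -> i != j -> u i != 0 -> u j != 0 ->
     ord (u i) != ord (u j).
  move=> i j ip jp ij ui uj; apply/negP => /eqP h.
  have ci : P`_i != 0 by apply/eqP => e; move: ui; rewrite /u e mul0r eqxx.
  have cj : P`_j != 0 by apply/eqP => e; move: uj; rewrite /u e mul0r eqxx.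
  have [a [a0 _ ha]] := ord_term _ i (hP i) ci.
  have [b [b0 _ hb]] := ord_term _ j (hP j) cj.
  by move: ij; rewrite (distinct _ _ _ _ a0 b0 ip jp) ?eqxx //; rewrite -ha -hb.
have hge := min_sum_ge_ u p 0 hd hx.
rewrite rmorph_sum /= -sumrB; apply: ogeSum_ => j _.
rewrite gsM gal_fix // gsX (sigX _ _ _ _ _ _ AS) -mulrBr.
have [cj|cj] := eqVneq P`_j 0; first by rewrite cj mul0r; left.
have [a [a0 ea ha]] := ord_term _ j (hP j) cj.
have hj : (j * n)%N%:Z <= w a.
  have := hge j (ltn_ord j); case.
    by move/eqP; rewrite mulf_eq0 (negPf cj) expf_eq0 (negPf y_neq0) andbF.
  by rewrite /u ha subr_ge0.
case: (posnP j) => [j0|j0].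
  by rewrite j0 !expr0 subrr mulr0; left.
have hj1 : (j * n)%N%:Z + 1 <= w a.
  have hne : w a != (j * n)%N%:Z by rewrite notj // j0 ltn_ord.
  by move: hj hne; set W := w a; set JN := (j * n)%N; lia.
rewrite exprDn big_ord_recl /= subn0 expr0 mulr1 bin0 mulr1n [y ^+ j + _]addrC addrK.
rewrite mulr_sumr; apply: ogeSum_ => i _.
rewrite /bump /= add1n mulrnAr.
apply: ogeMn_.
have h1 : ord_ge ord P`_j (w a) by right; rewrite ea.
have h2 : ord_ge ord (y ^+ (j - i.+1)) ((j - i.+1)%N%:Z * - n%:Z).
  by right; rewrite vX_ ?y_neq0 // hn.
have h3 : ord_ge ord ((c%:R : L) ^+ i.+1) 0 by rewrite -natrX; apply: oge_nat_.
apply: ogeW (ogeM_ _ _ _ _ h1 (ogeM_ _ _ _ _ h2 h3)) _.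
have hi : (i < j)%N by [].
have hm : ((j - i.+1) * n <= j.-1 * n)%N by rewrite leq_mul2r; apply/orP; right; lia.
move: hj1 hm; set W := w a; rewrite addr0; nia.
Qed.


Lemma ram_full i : (0 < i <= n)%N -> ram_group ord i = Gcov L.
Proof.
move=> /andP[i0 iN]; apply/setP => s; rewrite inE.
case hs: (s \in Gcov L) => //=; apply: pbT => x hx.
apply: (@ogeW _ _ _ _ _ (claimC _ _ hs hx)); rewrite lez_nat ltnS //.
Qed.

Lemma dprime_bound d' : dprime ord = Some d' -> (n * p.-1 <= d')%N.
Proof.
rewrite /dprime /series_nat; case: excluded_middle_informative => // H [<-].
case: (constructive_indefinite_description _ H) => N0 HN0 /=.
have hA : forall i, (0 < i <= n)%N ->
    (if i is 0 then 0%N else (#|ram_group ord i| - 1)%N) = p.-1.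
  by case=> [//|i] hi; rewrite ram_full // cardG subn1.
have nN : (n < N0)%N.
  rewrite ltnNge; apply/negP => h; have := HN0 n h; rewrite hA ?n0 ?leqnn //.
  by move=> e; have := prime_gt1 pr; lia.
pose F := fun m : nat => if m is 0 then 0%N else (#|ram_group ord m| - 1)%N.
rewrite (eq_bigr (fun i : 'I_N0 => F i)); last by move=> i _; rewrite /F; case: (nat_of_ord i).
rewrite -(big_mkord xpredT F) (@big_cat_nat _ _ _ n.+1 0 N0 _ _ (leq0n _) nN) /=.
apply: leq_trans (leq_addr _ _); rewrite big_nat_recl //= add0n.
rewrite (@eq_big_nat _ _ _ 0 n _ (fun _ => p.-1)).
  by rewrite sum_nat_const_nat subn0.
by move=> i /andP[_ hi]; exact: (hA i.+1 hi).
Qed.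
End WithN.

Lemma part1 : ord_ge_neg_dprime ord (y ^+ p.-1).
Proof.
rewrite /ord_ge_neg_dprime; case hd: (dprime ord) => [d'|] //.
right; rewrite vX_ ?y_neq0 //.
case: (lerP 0 (ord y)) => hy.
  by move: hy; set o := ord y; have := prime_gt0 pr; nia.
set m := `|ord y|%N.
have hn : ord y = - (m%:Z) by move: hy; rewrite /m; set o := ord y; lia.
have m0 : (0 < m)%N by move: hy; rewrite /m; set o := ord y; lia.
have := dprime_bound _ hn m0 _ hd.
rewrite hn; have := prime_gt0 pr; nia.
Qed.
End Part1.

Theorem lemma7p2 (k : closedFieldType) (p : nat) (K : fieldType)
    (iota : {rmorphism k -> K}) (L : splittingFieldType K)
    (sigma : gal_of {:L}) (y : L) (f : K) :
  prime p -> p \in [pchar k] ->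
  function_field_1 iota ->
  galois 1%VS {:L} -> #|Gcov L| = p -> <[sigma]>%g = Gcov L ->
  AS_generator p sigma y f -> global_standard_form iota p f ->
  let z := y ^+ p.-1 in
  let zdual := z - 2%:R in
  [/\ (forall ord : L -> int, pointX iota ord -> ord_ge_neg_dprime ord z),
      galTrace 1%VS {:L} z != 0 &
      forall g1 g2 : gal_of {:L}, g1 \in Gcov L -> g2 \in Gcov L ->
        galTrace 1%VS {:L} (g1 z * g2 zdual) = (g1 == g2)%:R].
Proof.
move=> pr chk _ galL cardG gen AS gsf z zdual; rewrite /zdual /z.
split.
- move=> ord hX; apply: part1; eassumption.
- apply: part2; eassumption.
- move=> g1 g2 h1 h2; apply: part3; eassumption.
Qed.
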